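(* Let $\kappa$ be an infinite cardinal. The set $B=\{(A,\,A\cap C,\,C): A,C\in\mathcal{F}(\kappa),\ A\sim C\}$ is a bounded Boolean sublattice of $S$.
   Context: $\mathcal{F}(\kappa)$ is the Boolean lattice of subsets $X\subseteq\kappa$ that are finite or cofinite. For $A,C\in\mathcal{F}(\kappa)$, $A\sim C$ means that either both $A,C$ are finite or both $\kappa\setminus A,\kappa\setminus C$ are finite. Let $\mu(A,B,C)=(A\cap B)\cup(A\cap C)\cup(B\cap C)$; a triple is balanced if $A\cap B=A\cap C=B\cap C$. $S$ is the set of balanced triples $(A,B,C)\in\mathcal{F}(\kappa)^3$ with $C\setminus\mu(A,B,C)$ finite, ordered componentwise; it is a bounded lattice with componentwise meet, join $(A,B,C)\vee(A',B',C')=(U_1\cup m,U_2\cup m,U_3\cup m)$ where $U_1=A\cup A'$, $U_2=B\cup B'$, $U_3=C\cup C'$, $m=\mu(U_1,U_2,U_3)$, and bounds $(\emptyset,\emptyset,\emptyset)$, $(\kappa,\kappa,\kappa)$. *)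

(* Defs.v *)
From mathcomp Require Import all_boot.
From mathcomp Require Import boolp classical_sets cardinality.
Set Implicit Arguments. Unset Strict Implicit. Unset Printing Implicit Defensive.
Local Open Scope classical_set_scope.

(* The infinite cardinal kappa is represented by an arbitrary infinite type T;
   subsets of kappa are [set T]. *)

Definition Ffc {T : Type} (X : set T) : Prop :=
  finite_set X \/ finite_set (~` X).

Definition simF {T : Type} (A C : set T) : Prop :=
  (finite_set A /\ finite_set C) \/ (finite_set (~` A) /\ finite_set (~` C)).

Definition mu {T : Type} (A B C : set T) : set T :=
  (A `&` B) `|` (A `&` C) `|` (B `&` C).

Definition triple (T : Type) := (set T * set T * set T)%type.

Definition balanced {T : Type} (t : triple T) : Prop :=
  let: (A, B, C) := t in A `&` B = A `&` C /\ A `&` C = B `&` C.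

Definition inS {T : Type} (t : triple T) : Prop :=
  let: (A, B, C) := t in
  [/\ Ffc A, Ffc B, Ffc C, balanced t & finite_set (C `\` mu A B C)].

Definition meetS {T : Type} (t t' : triple T) : triple T :=
  let: (A, B, C) := t in let: (A', B', C') := t' in
  (A `&` A', B `&` B', C `&` C').

Definition joinS {T : Type} (t t' : triple T) : triple T :=
  let: (A, B, C) := t in let: (A', B', C') := t' in
  let U1 := A `|` A' in let U2 := B `|` B' in let U3 := C `|` C' in
  let m := mu U1 U2 U3 in
  (U1 `|` m, U2 `|` m, U3 `|` m).

Definition botS {T : Type} : triple T := (set0, set0, set0).
Definition topS {T : Type} : triple T := (setT, setT, setT).

Definition inB {T : Type} (t : triple T) : Prop :=
  exists A C : set T, [/\ Ffc A, Ffc C, simF A C & t = (A, A `&` C, C)].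

Definition bounded_boolean_sublattice {T : Type} (X : triple T -> Prop) : Prop :=
  [/\ (forall t, X t -> inS t),
      X botS /\ X topS,
      (forall t t', X t -> X t' -> X (meetS t t') /\ X (joinS t t')),
      (forall x y z, X x -> X y -> X z ->
         meetS x (joinS y z) = joinS (meetS x y) (meetS x z))
    & (forall x, X x -> exists y, [/\ X y, meetS x y = botS & joinS x y = topS])].

(* Main.v *)
Require Import Defs.
From mathcomp Require Import all_boot.
From mathcomp Require Import boolp classical_sets cardinality.
Set Implicit Arguments. Unset Strict Implicit.
Local Open Scope classical_set_scope.

Ltac seteq := apply/seteqP; split=> x /=; rewrite /mu /setU /setI /setC /setD /mkset /=; tauto.

Section H.
Variable T : Type.
Implicit Types A C : set T.

Lemma Ffc_I A C : Ffc A -> Ffc C -> Ffc (A `&` C).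
Proof.
case=> hA; [by left; apply: finite_setI; left|].
case=> hC; [by left; apply: finite_setI; right|].
by right; rewrite setCI finite_setU.
Qed.

Lemma Ffc_C A : Ffc A -> Ffc (~` A).
Proof. by rewrite /Ffc setCK; case; [right|left]. Qed.

Lemma Ffc_U A C : Ffc A -> Ffc C -> Ffc (A `|` C).
Proof.
move=> /Ffc_C hA /Ffc_C hC; have := Ffc_C (Ffc_I hA hC).
by rewrite -setCU setCK.
Qed.

Lemma simF_I A C A' C' : simF A C -> simF A' C' -> simF (A `&` A') (C `&` C').
Proof.
case=> [[hA hC]|[hA hC]].
  by move=> _; left; split; apply: finite_setI; left.
case=> [[hA' hC']|[hA' hC']].
  by left; split; apply: finite_setI; right.
by right; rewrite !setCI !finite_setU.
Qed.

Lemma simF_C A C : simF A C -> simF (~` A) (~` C).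
Proof. by rewrite /simF !setCK; case; [right|left]. Qed.

Lemma simF_U A C A' C' : simF A C -> simF A' C' -> simF (A `|` A') (C `|` C').
Proof.
move=> /simF_C h /simF_C h'; have := simF_C (simF_I h h').
by rewrite -!setCU !setCK.
Qed.

Lemma meetB A C A' C' : meetS (A, A `&` C, C) (A', A' `&` C', C') =
  (A `&` A', (A `&` A') `&` (C `&` C'), C `&` C').
Proof. rewrite /meetS; congr (_, _, _); seteq. Qed.

Lemma joinB A C A' C' : joinS (A, A `&` C, C) (A', A' `&` C', C') =
  (A `|` A', (A `|` A') `&` (C `|` C'), C `|` C').
Proof. rewrite /joinS; congr (_, _, _); seteq. Qed.

End H.

Theorem lemma5p3 (T : Type) (Tinf : infinite_set [set: T]) :
  bounded_boolean_sublattice (@inB T).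
Proof.
split.
- move=> _ [A [C [hA hC hs ->]]]; split => //.
  + exact: Ffc_I.
  + rewrite /balanced; split; seteq.
  + have -> : C `\` mu A (A `&` C) C = C `\` A by seteq.
    case: hs => [[_ fC]|[fA _]]; first exact: finite_setD.
    by apply: sub_finite_set fA => x [].
- split.
  + exists set0, set0; split; rewrite ?setI0 //; try (by left; exact: finite_set0).
    by left; split; exact: finite_set0.
  + exists setT, setT; split; rewrite ?setIT //; try (by right; rewrite setCT; exact: finite_set0).
    by right; rewrite setCT; split; exact: finite_set0.
- move=> _ _ [A [C [hA hC hs ->]]] [A' [C' [hA' hC' hs' ->]]].
  rewrite meetB joinB; split.
  + exists (A `&` A'), (C `&` C'); split => //; by [apply: Ffc_I | apply: simF_I].
  + exists (A `|` A'), (C `|` C'); split => //; by [apply: Ffc_U | apply: simF_U].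
- move=> _ _ _ [A [C [hA hC hs ->]]] [A' [C' [hA' hC' hs' ->]]] [A'' [C'' [hA'' hC'' hs'' ->]]].
  rewrite joinB !meetB joinB; congr (_, _, _); seteq.
- move=> _ [A [C [hA hC hs ->]]].
  exists (~` A, ~` A `&` ~` C, ~` C); split.
  + exists (~` A), (~` C); split => //; by [apply: Ffc_C | apply: simF_C].
  + rewrite meetB /botS !setICr; congr (_, _, _); seteq.
  + rewrite joinB /topS !setUCr; congr (_, _, _); seteq.
Qed.
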